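(* Let $a,b,c$ be positive integers and let $G$ be a graph whose rank cardinality vector is $(a,b,c,1)$. Then some vertex of corner rank 3 or 4 is adjacent to every vertex of corner rank 2.
   Context: All graphs are finite, nonempty, and reflexive (every vertex has a loop). $N[v]$ is the closed neighborhood of $v$ (including $v$). For distinct $v,w$, $w$ strictly corners $v$ if $N[v]\subsetneq N[w]$; $v$ is then a strict corner. Corner ranking: set $G^{(1)}=G$, $k=1$. If $G^{(k)}$ is a clique, give all its vertices rank $k$ and stop. Else if $G^{(k)}$ has no strict corners, give all its vertices rank $\infty$ and stop. Else give every strict corner of $G^{(k)}$ rank $k$, delete them to get $G^{(k+1)}$ (induced subgraph), increase $k$ and repeat. The corner rank is the largest rank of a vertex; $X_k$ is the set of rank-$k$ vertices. The rank cardinality vector of a graph of finite corner rank $\alpha$ is $(x_\alpha,\dots,x_1)$ with $x_k=|X_k|$. *)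

(* Defs.v *)
From mathcomp Require Import all_boot.
Set Implicit Arguments.
Unset Strict Implicit.
Unset Printing Implicit Defensive.

(* A graph is given by a finite vertex type T and an adjacency relation
   e : rel T, assumed reflexive and symmetric (hypotheses of the theorem). *)
Section CornerRank.
Variables (T : finType) (e : rel T).

Definition nbhd (S : {set T}) (v : T) : {set T} := [set w in S | e v w].

Definition is_clique (S : {set T}) : bool :=
  [forall u in S, forall v in S, e u v].

Definition strict_corners (S : {set T}) : {set T} :=
  [set v in S | [exists w in S, (w != v) && (nbhd S v \proper nbhd S w)]].

Definition stops_at (S : {set T}) : bool :=
  is_clique S || (strict_corners S == set0).

(* G^(k) for k >= 1 : G^(1) = G, G^(k+1) = G^(k) minus its strict corners *)
Definition Gk (k : nat) : {set T} :=
  iter k.-1 (fun S => S :\: strict_corners S) [set: T].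

Definition reaches (k : nat) : bool :=
  (0 < k) && [forall j : 'I_k, (0 < j) ==> ~~ stops_at (Gk j)].

(* X_k : the set of vertices of (finite) corner rank k *)
Definition Xk (k : nat) : {set T} :=
  if reaches k then
    (if is_clique (Gk k) then Gk k else strict_corners (Gk k))
  else set0.

Definition has_corner_rank (alpha : nat) : bool :=
  reaches alpha && is_clique (Gk alpha).

End CornerRank.

(* Main.v *)
Require Import Defs.
From mathcomp Require Import all_boot.

Lemma reaches_le {T : finType} {e : rel T} {j k} :
  reaches e k -> 0 < j -> j <= k -> reaches e j.
Proof.
move=> /andP[_ /forallP H] Hj Hjk; apply/andP; split=> //.
apply/forallP=> i; exact: (H (widen_ord Hjk i)).
Qed.

Theorem lemma3p23 (T : finType) (e : rel T) (a b c : nat) :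
  reflexive e -> symmetric e -> 0 < #|T| ->
  0 < a -> 0 < b -> 0 < c ->
  has_corner_rank e 4 ->
  #|Xk e 4| = a -> #|Xk e 3| = b -> #|Xk e 2| = c -> #|Xk e 1| = 1 ->
  exists2 v, v \in Xk e 3 :|: Xk e 4 & forall w, w \in Xk e 2 -> e v w.
Proof.
move=> _ Hsym _ _ _ _ Hcr _ _ _ H1.
have R4 : reaches e 4 by case/andP: Hcr.
have NC : forall j, 0 < j < 4 -> ~~ is_clique e (Gk e j).
  move=> j /andP[Hj0 Hj4]; case/andP: R4 => _ /forallP /(_ (Ordinal Hj4)) /=.
  by rewrite Hj0 /= /stops_at negb_or => /andP[].
have X1 : Xk e 1 = strict_corners e [set: T].
  by rewrite /Xk (reaches_le R4) // (negbTE (NC 1 isT)).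
have X2 : Xk e 2 = strict_corners e (Gk e 2).
  by rewrite /Xk (reaches_le R4) // (negbTE (NC 2 isT)).
have X3 : Xk e 3 = strict_corners e (Gk e 3).
  by rewrite /Xk (reaches_le R4) // (negbTE (NC 3 isT)).
have X4 : Xk e 4 = Gk e 4.
  by rewrite /Xk R4; case/andP: Hcr => _ ->.
rewrite X1 in H1.
have /cards1P [u Hu] : #|strict_corners e [set: T]| == 1 by rewrite H1.
set S := Gk e 2.
have HS : S = [set: T] :\: [set u] by rewrite /S /Gk /= Hu.
have uin : u \in strict_corners e [set: T] by rewrite Hu set11.
move: (uin); rewrite /strict_corners inE => /andP[_ /existsP [z /andP[_ /andP[zu Huz]]]].
have zS : z \in S by rewrite HS !inE zu.
set P := [pred w | (w \in S) && (nbhd e S z \subset nbhd e S w)].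
have Pz : P z by rewrite /= zS subxx.
case: (arg_maxnP (fun w => #|nbhd e S w|) Pz) => w /andP[wS Hzw] Hmax.
exists w.
  have G3 : Gk e 3 = S :\: strict_corners e S by [].
  have G4 : Gk e 4 = Gk e 3 :\: strict_corners e (Gk e 3) by [].
  have wnot : w \notin strict_corners e S.
    apply/negP; rewrite /strict_corners inE => /andP[_ /existsP [w' /andP[w'S /andP[_ Hww']]]].
    have Pw' : P w' by rewrite /= w'S (subset_trans Hzw) // proper_sub.
    have := Hmax w' Pw'; have := proper_card Hww'.
    by rewrite /= => /leq_trans H /H; rewrite ltnn.
  rewrite X3 X4 G4 in_setU in_setD.
  case: (w \in strict_corners e (Gk e 3)) => //=.
  by rewrite G3 in_setD (negbTE wnot) wS.
move=> x; rewrite X2 -/S /strict_corners inE => /andP[xS /existsP [y /andP[yS /andP[yx Hxy]]]].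
have exu : e x u.
  apply/negPn/negP => Hn.
  have : x \in strict_corners e [set: T].
    rewrite /strict_corners inE in_setT /=; apply/existsP; exists y; rewrite in_setT yx /=.
    apply: (sub_proper_trans _ (proper_sub_trans Hxy _)).
      apply/subsetP=> v; rewrite /nbhd in_set => /andP[_ Hv]; rewrite in_set Hv andbT HS in_setD1 in_setT andbT.
      by apply/eqP=> Hvu; subst v; rewrite Hv in Hn.
    by apply/subsetP=> v; rewrite !inE => /andP[_ ->].
  by rewrite Hu inE => /eqP Hxu; move: xS; rewrite HS Hxu !inE eqxx.
have : x \in nbhd e [set: T] z.
  by apply: (subsetP (proper_sub Huz)); rewrite inE in_setT /= Hsym.
rewrite inE => /andP[_ Hzx].
have : x \in nbhd e S w by apply: (subsetP Hzw); rewrite inE xS.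
by rewrite inE => /andP[_].
Qed.
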